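(* Let $\mathcal A$ be a causal linear time-invariant algorithm with $n$ oracles and transfer function $\hat H(z)$, let $\kappa$ be a subset of its oracles with $D[\kappa]$ invertible, and let $\pi=(m+1,\dots,n,1,\dots,m)$ be a cyclic permutation of the oracles. Then conjugation and cyclic permutation commute: $\mathcal C_\kappa P_\pi\mathcal A$ and $P_\pi\mathcal C_\kappa\mathcal A$ have identical transfer functions.
   Context: A linear time-invariant algorithm with realization $(A,B,C,D)$ generates $x^{k+1}=Ax^k+Bu^k$, $y^k=Cx^k+Du^k$, $u^k=\phi(y^k)$, with oracles $\partial f_1,\dots,\partial f_n$ ((sub)gradients of convex functions) called sequentially in the order $1,\dots,n$; its transfer function is $\hat H(z)=C(zI-A)^{-1}B+D$. Causality means $D$ (blockwise by oracle, in call order) is lower triangular. $D[\kappa]$ is the principal block of $D$ indexed by $\kappa$. $P_\pi\mathcal A$ denotes the algorithm that executes the update equations of $\mathcal A$ in a different order so that the oracle calls within each iteration occur in the order $\pi$. $\mathcal C_\kappa\mathcal A$ denotes the algorithm obtained by rewriting $\mathcal A$ to call $\partial f_i^\star=(\partial f_i)^{-1}$ ($f^\star$ the Fenchel conjugate) instead of $\partial f_i$ for each $i\in\kappa$, thereby swapping oracle argument and output for those oracles. *)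

(* Defs.v *)
From HB Require Import structures.
From mathcomp Require Import all_boot all_order all_algebra fraction.
Set Implicit Arguments. Unset Strict Implicit. Unset Printing Implicit Defensive.
Import Order.TTheory GRing.Theory Num.Theory.
Local Open Scope ring_scope.

(* Conventions:
   - The algorithm has n oracles, numbered 0..n-1 (= the paper's 1..n), called
     in this order within each iteration.
   - The input/output vectors u, y live in R^p; coordinate j belongs to oracle
     [owner j] (so oracle i has block {j | owner j = i}).  Coordinates are
     kept labelled: permuting/conjugating never reorders the coordinates of u
     and y, it only changes the realization.
   - State dimension s. *)

Record realization (R : Type) (s p : nat) := Realization {
  rA : 'M[R]_s; rB : 'M[R]_(s, p); rC : 'M[R]_(p, s); rD : 'M[R]_p }.

Section Defs.
Variables (R : fieldType) (n p : nat) (owner : 'I_p -> 'I_n).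

Definition oracle_coords (kappa : {set 'I_n}) : {set 'I_p} :=
  [set j | owner j \in kappa].

Definition principal_sub (D : 'M[R]_p) (K : {set 'I_p}) : 'M[R]_#|K| :=
  \matrix_(i < #|K|, j < #|K|) D (enum_val i) (enum_val j).

Definition causal (s : nat) (X : realization R s p) : Prop :=
  forall i j : 'I_p, (owner i < owner j)%N -> rD X i j = 0.

Definition proj (S : {set 'I_p}) : 'M[R]_p := diag_mx (\row_j (j \in S)%:R).

(* P_pi A for pi = (m+1,...,n,1,...,m): oracles 1..m of iteration k+1 are
   executed at the end of iteration k.  New state (x^k, u_1^k) where
   u_1 are the outputs of oracles 1..m. *)
Definition perm_alg (m : nat) (s : nat) (X : realization R s p)
  : realization R (s + p) p :=
  let P1 := proj [set j | (owner j < m)%N] in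
  let P2 := 1%:M - P1 in
  let A := rA X in let B := rB X in let C := rC X in let D := rD X in
  Realization
    (block_mx A (B *m P1) 0 0)
    (col_mx (B *m P2) P1)
    (row_mx (P2 *m C + P1 *m C *m A) (P2 *m D *m P1 + P1 *m C *m B *m P1))
    (P2 *m D *m P2 + P1 *m C *m B *m P2 + P1 *m D *m P1).

(* C_kappa A: oracles in kappa are replaced by their inverses (conjugate
   subdifferentials), swapping their arguments and outputs.  Solving
   y_K = C_K x + D u for u_K uses D[K]^{-1}, embedded as Minv. *)
Definition conj_alg (kappa : {set 'I_n}) (s : nat) (X : realization R s p)
  : realization R s p :=
  let PK := proj (oracle_coords kappa) in
  let PN := 1%:M - PK in
  let A := rA X in let B := rB X in let C := rC X in let D := rD X in
  let Minv := PK *m invmx (PK *m D *m PK + PN) *m PK in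
  let Q := PN - Minv *m D *m PN + Minv in
  let L := PN *m D + PK in
  Realization (A - B *m Minv *m C) (B *m Q) (PN *m C - L *m Minv *m C) (L *m Q).

Definition frac_poly (q : {poly R}) : {fraction {poly R}} := FracField.tofrac q.
Definition ratC (x : R) : {fraction {poly R}} := frac_poly x%:P.

Definition transfer (s : nat) (X : realization R s p)
  : 'M[{fraction {poly R}}]_p :=
  map_mx ratC (rC X) *m invmx ((frac_poly 'X)%:M - map_mx ratC (rA X))
    *m map_mx ratC (rB X) + map_mx ratC (rD X).

End Defs.

(* Main.v *)
Require Import Defs.
From HB Require Import structures.
From mathcomp Require Import all_boot all_order all_algebra fraction.
Set Implicit Arguments. Unset Strict Implicit. Unset Printing Implicit Defensive.
Import Order.TTheory GRing.Theory Num.Theory.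
Local Open Scope ring_scope.
From mathcomp Require Import ring.
Section RL.
Variables (R : fieldType) (n p : nat) (owner : 'I_p -> 'I_n).
Local Notation proj := (@proj R p).

Lemma projE S i j : proj S i j = (i \in S)%:R *+ (i == j).
Proof. by rewrite /proj !mxE. Qed.
Lemma projML S q (M : 'M[R]_(p,q)) i j : (proj S *m M) i j = (i \in S)%:R * M i j.
Proof. by rewrite /proj mul_diag_mx !mxE. Qed.
Lemma projMR S q (M : 'M[R]_(q,p)) i j : (M *m proj S) i j = M i j * (j \in S)%:R.
Proof. by rewrite /proj mul_mx_diag !mxE. Qed.
Lemma mxDE (A B : 'M[R]_p) i j : (A + B) i j = A i j + B i j.
Proof. by rewrite mxE. Qed.
Lemma mxNE (A : 'M[R]_p) i j : (- A) i j = - A i j.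
Proof. by rewrite mxE. Qed.
Lemma projC S : 1%:M - proj S = proj (~: S).
Proof.
apply/matrixP=> i j; rewrite mxDE mxNE !projE !mxE in_setC.
by case: eqP => _ //=; case: (i \in S) => /=; rewrite ?subr0 ?subrr.
Qed.
Lemma projP S : proj S *m proj S = proj S.
Proof.
apply/matrixP=> i j; rewrite projML projE.
by case: (i \in S); case: (i == j); rewrite /= ?mul1r ?mul0r ?mulr0n.
Qed.
Lemma projCom S T : proj S *m proj T = proj T *m proj S.
Proof. by apply/matrixP=> i j; rewrite !projML !projE; case: eqP => [->|]; rewrite /= ?mulr0 // mulrC. Qed.

Definition low S1 (M : 'M[R]_p) := proj S1 *m M *m proj (~: S1) = 0.

Lemma low_proj S1 T : low S1 (proj T).
Proof.
rewrite /low; apply/matrixP=> i j; rewrite projMR projML projE !mxE in_setC.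
by case: eqP => [->|] /=; case: (j \in S1); rewrite /= ?mulr0 ?mul0r.
Qed.
Lemma low1 S1 : low S1 1%:M.
Proof. by rewrite /low mulmx1 -projC mulmxBr mulmx1 projP subrr. Qed.
Lemma lowD S1 M N : low S1 M -> low S1 N -> low S1 (M + N).
Proof. by rewrite /low mulmxDr mulmxDl => -> ->; rewrite addr0. Qed.
Lemma lowN S1 M : low S1 M -> low S1 (- M).
Proof. by rewrite /low mulmxN mulNmx => ->; rewrite oppr0. Qed.
Lemma lowB S1 M N : low S1 M -> low S1 N -> low S1 (M - N).
Proof. by move=> hM hN; apply: lowD => //; apply: lowN. Qed.
Lemma lowM S1 M N : low S1 M -> low S1 N -> low S1 (M *m N).
Proof.
rewrite /low => hM hN.
have e : proj S1 + proj (~: S1) = 1%:M by rewrite -projC addrC subrK.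
rewrite -{1}[M]mulmx1 -e mulmxDr !mulmxDl !mulmxDr !mulmxDl !mulmxA hM !mul0mx addr0.
by rewrite -(mulmxA (proj S1 *m M) (proj S1) N) -(mulmxA (proj S1 *m M) _ (proj _)) hN mulmx0.
Qed.
End RL.
Section EU.
Variables (R : fieldType) (p : nat).
Local Notation proj := (@proj R p).

Lemma selL k (f : 'I_k -> 'I_p) q (M : 'M[R]_(p,q)) i j :
  ((\matrix_(a, b) (f a == b)%:R : 'M[R]_(k,p)) *m M) i j = M (f i) j.
Proof.
rewrite !mxE (bigD1 (f i)) //= mxE eqxx mul1r big1 ?addr0 // => l hl.
by rewrite mxE eq_sym (negbTE hl) mul0r.
Qed.
Lemma selR k (f : 'I_k -> 'I_p) q (M : 'M[R]_(q,p)) i j :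
  (M *m (\matrix_(a, b) (f a == b)%:R : 'M[R]_(k,p))^T) i j = M i (f j).
Proof.
rewrite !mxE (bigD1 (f j)) //= !mxE eqxx mulr1 big1 ?addr0 // => l hl.
by rewrite !mxE eq_sym (negbTE hl) mulr0.
Qed.

Lemma E_unit (D : 'M[R]_p) (S : {set 'I_p}) : principal_sub D S \in unitmx ->
  proj S *m D *m proj S + (1%:M - proj S) \in unitmx.
Proof.
move=> uP.
pose J : 'M[R]_(#|S|, p) := \matrix_(a, b) (enum_val a == b)%:R.
have JDJ : J *m D *m J^T = principal_sub D S.
  by apply/matrixP=> i j; rewrite selR selL !mxE.
have JJ : J *m J^T = 1%:M.
  apply/matrixP=> i j; rewrite selR !mxE (inj_eq enum_val_inj).
  by case: (i == j).
have JtJ : J^T *m J = proj S.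
  apply/matrixP=> a b; rewrite !mxE.
  case Ha: (a \in S).
    rewrite (bigD1 (enum_rank_in Ha a)) //= !mxE enum_rankK_in // eqxx mul1r.
    rewrite big1 ?addr0; first by case: (a == b).
    move=> i hi; rewrite !mxE; case: eqP => [ea|]; last by rewrite mul0r.
    by rewrite -(enum_valK_in Ha i) ea eqxx in hi.
  rewrite big1 ?mul0rn // => i _; rewrite !mxE; case: eqP => [ea|]; last by rewrite mul0r.
  by move: (enum_valP i); rewrite ea Ha.
have KJ : proj S *m J^T = J^T.
  apply/matrixP=> a i; rewrite projML !mxE; case: eqP => [<-|]; last by rewrite mulr0.
  by rewrite enum_valP mul1r.
have NJ : proj (~: S) *m J^T = 0.
  apply/matrixP=> a i; rewrite projML !mxE; case: eqP => [<-|]; last by rewrite mulr0.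
  by rewrite in_setC enum_valP mul0r.
have KN : proj S *m proj (~: S) = 0 by rewrite -projC mulmxBr mulmx1 projP subrr.
have NN : proj (~: S) *m proj (~: S) = proj (~: S) by apply: projP.
have e : proj S + proj (~: S) = 1%:M by rewrite -projC addrC subrK.
rewrite projC.
set Dk := principal_sub D S.
have t1 : proj S *m D *m proj S *m (J^T *m invmx Dk *m J) = proj S.
  rewrite -JtJ !mulmxA -(mulmxA (J^T *m J *m D *m J^T) J J^T) JJ mulmx1.
  rewrite -(mulmxA J^T J D) -(mulmxA J^T (J *m D) J^T) JDJ -/Dk.
  by rewrite -(mulmxA J^T Dk) mulmxV // mulmx1.
suff h : (proj S *m D *m proj S + proj (~: S)) *m (J^T *m invmx Dk *m J + proj (~: S)) = 1%:M.
  by case: (mulmx1_unit h).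
rewrite mulmxDl !mulmxDr t1 -(mulmxA _ (proj S)) KN mulmx0 addr0 NN.
by rewrite !mulmxA NJ !mul0mx add0r e.
Qed.
End EU.
Section Abs.
Variable K : fieldType.

Lemma mx_inv_uniq p (M U : 'M[K]_p) : M *m U = 1%:M -> M \in unitmx /\ invmx M = U.
Proof.
move=> MU; have [uM _] := mulmx1_unit MU; split=> //.
by rewrite -[invmx M]mulmx1 -MU mulmxA mulVmx // mul1mx.
Qed.

Lemma conj_abs s p (z : K) (a : 'M[K]_s) (b : 'M[K]_(s,p)) (c : 'M[K]_(p,s)) (d : 'M[K]_p)
  (PK : 'M[K]_p) :
  PK *m PK = PK ->
  let PN := 1%:M - PK in
  let E := PK *m d *m PK + PN in
  E \in unitmx ->
  let Minv := PK *m invmx E *m PK in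
  let Q := PN - Minv *m d *m PN + Minv in
  let L := PN *m d + PK in
  z%:M - a \in unitmx ->
  z%:M - (a - b *m Minv *m c) \in unitmx ->
  let T := c *m invmx (z%:M - a) *m b + d in
  let M := PK *m T + PN in
  M \in unitmx /\
  (PN *m c - L *m Minv *m c) *m invmx (z%:M - (a - b *m Minv *m c)) *m (b *m Q) + L *m Q
  = (PK + PN *m T) *m invmx M.
Proof.
move=> hK PN E uE Minv Q L uz uz2 T M.
have hNK : PN *m PK = 0 by rewrite mulmxBl mul1mx hK subrr.
have hKN : PK *m PN = 0 by rewrite mulmxBr mulmx1 hK subrr.
have hNN : PN *m PN = PN by rewrite mulmxBl mul1mx hKN subr0.
have PNdef : PN + PK = 1%:M by rewrite subrK.
clearbody PN.
set W := invmx E.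
have EK : E *m PK = PK *m E.
  by rewrite /E mulmxDl mulmxDr hNK hKN !addr0 -!mulmxA hK !mulmxA hK.
have WK : PK *m W = W *m PK.
  by rewrite -[PK *m W]mul1mx -(mulVmx uE) -mulmxA (mulmxA E) EK -(mulmxA PK) mulmxV // mulmx1.
have PNe : PN = 1%:M - PK by rewrite -PNdef addrK.
have WN : PN *m W = W *m PN by rewrite PNe mulmxBl mulmxBr mul1mx mulmx1 WK.
have KdM : PK *m d *m Minv = PK.
  have e1 : PK *m d *m PK = E - PN by rewrite /E addrK.
  rewrite /Minv !mulmxA e1 -/W mulmxBl (mulmxV uE) mulmxBl mul1mx WN -mulmxA.
  by rewrite hNK mulmx0 subr0.
have NM : PN *m Minv = 0 by rewrite /Minv !mulmxA hNK !mul0mx.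
have MN : Minv *m PN = 0 by rewrite /Minv -!mulmxA hKN !mulmx0.
have key2 : (PK *m d + PN) *m Minv = PK by rewrite mulmxDl KdM NM addr0.
have key1 : (PK *m d + PN) *m Q = 1%:M.
  rewrite /Q mulmxDr mulmxBr key2 (mulmxA _ (Minv *m d)) (mulmxA _ Minv) key2 mulmxDl hNN.
  by rewrite [PK *m d *m PN + PN]addrC addrK.
clearbody Q.
set a2 := a - b *m Minv *m c.
set V2 := invmx (z%:M - a2) *m (b *m Q).
set U := Q - Minv *m c *m V2.
have V2E : V2 = invmx (z%:M - a) *m b *m U.
  have : (z%:M - a) *m V2 = b *m U.
    have -> : z%:M - a = (z%:M - a2) - b *m Minv *m c by rewrite /a2 opprB [b *m Minv *m c - a]addrC addrA addrK.
    rewrite mulmxBl /V2 mulmxA mulmxV // mul1mx /U mulmxBr !mulmxA.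
    done.
  by move=> h; rewrite -mulmxA -h mulmxA mulVmx // mul1mx.
have V2E' : V2 = invmx (z%:M - a) *m (b *m U) by rewrite V2E mulmxA.
have Ue : U = Q - Minv *m c *m V2 by [].
clearbody U.
have MU : M *m U = 1%:M.
  rewrite /M /T mulmxDl mulmxDr mulmxDl -!mulmxA -V2E' -addrA.
  have -> : PK *m (d *m U) + PN *m U = (PK *m d + PN) *m U by rewrite mulmxDl mulmxA.
  rewrite Ue mulmxBr key1 (mulmxA _ (Minv *m c)) (mulmxA _ Minv) key2.
  by rewrite -(mulmxA PK c V2) addrC subrK.
have [uM iM] := mx_inv_uniq MU.
split=> //; rewrite iM.
have -> : (PN *m c - L *m Minv *m c) *m invmx (z%:M - a2) *m (b *m Q) = PN *m c *m V2 - L *m (Minv *m c *m V2).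
  by rewrite -mulmxA -/V2 mulmxBl !mulmxA.
have eX : PN *m c *m V2 = PN *m (c *m invmx (z%:M - a) *m b) *m U by rewrite V2E !mulmxA.
rewrite -addrA (addrC (- _)) -mulmxBr -Ue eX /T /L mulmxDr !mulmxDl.
by rewrite addrA addrC.
Qed.
End Abs.
Section Abs2.
Lemma zid (V : zmodType) (x y a b c : V) : -(x + y) + ((a + x) + ((b + y) + c)) = c + a + b.
Proof.
by rewrite (addrC a x) (addrC b y) -(addrA y b c) addrACA addKr addrA [LHS]addrC addrA.
Qed.
Variable K : fieldType.
Lemma perm_abs s p (z : K) (a : 'M[K]_s) (b : 'M[K]_(s,p)) (c : 'M[K]_(p,s)) (d : 'M[K]_p)
  (P1 : 'M[K]_p) :
  P1 *m P1 = P1 -> z != 0 -> z%:M - a \in unitmx ->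
  let P2 := 1%:M - P1 in
  P1 *m d *m P2 = 0 ->
  let A' := block_mx a (b *m P1) 0 0 in
  let B' := col_mx (b *m P2) P1 in
  let C' := row_mx (P2 *m c + P1 *m c *m a) (P2 *m d *m P1 + P1 *m c *m b *m P1) in
  let D' := P2 *m d *m P2 + P1 *m c *m b *m P2 + P1 *m d *m P1 in
  z%:M - A' \in unitmx /\
  C' *m invmx (z%:M - A') *m B' + D' =
  (z *: P1 + P2) *m (c *m invmx (z%:M - a) *m b + d) *m (z^-1 *: P1 + P2).
Proof.
move=> hP hz uz P2 hd A' B' C' D'.
have h21 : P2 *m P1 = 0 by rewrite mulmxBl mul1mx hP subrr.
have h12 : P1 *m P2 = 0 by rewrite mulmxBr mulmx1 hP subrr.
clearbody P2.
have e1 : z%:M - A' = block_mx (z%:M - a) (- (b *m P1)) 0 z%:M.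
  by rewrite /A' (scalar_mx_block s p z) opp_block_mx add_block_mx !oppr0 !addr0 add0r.
have uA : z%:M - A' \in unitmx.
  by rewrite e1 unitmxE det_ublock det_scalar unitrM -unitmxE uz /= unitrX // unitfE.
split=> //.
set R := invmx (z%:M - a).
set Si := z^-1 *: P1 + P2.
set V' := col_mx (R *m b *m Si) (z^-1 *: P1).
have hV : (z%:M - A') *m V' = B'.
  rewrite e1 mul_block_col /B'; congr col_mx.
    rewrite !mulmxA mulmxV // mul1mx /Si mulmxDr -scalemxAr mulNmx -scalemxAr -mulmxA hP.
    by rewrite addrC addrA addNr add0r.
  by rewrite mul0mx add0r mul_scalar_mx scalerA mulfV // scale1r.
have -> : C' *m invmx (z%:M - A') *m B' = C' *m V' by rewrite -hV -mulmxA mulKmx.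
rewrite /C' /V' mul_row_col.
have aR : a *m R = z *: R - 1%:M.
  have h := mulmxV uz; rewrite mulmxBl mul_scalar_mx in h.
  by rewrite -h opprB addrCA subrr addr0.
set Sg := z *: P1 + P2.
have cR : (P2 *m c + P1 *m c *m a) *m R = Sg *m c *m R - P1 *m c.
  rewrite mulmxDl -(mulmxA (P1 *m c) a R) aR mulmxBr mulmx1 -scalemxAr /Sg !mulmxDl -!scalemxAl.
  by rewrite addrA [P2 *m c *m R + _]addrC.
have T1 : (P2 *m c + P1 *m c *m a) *m (R *m b *m Si)
   = Sg *m (c *m R *m b) *m Si - P1 *m c *m b *m Si.
  by rewrite !mulmxA cR mulmxBl mulmxBl.
have T2 : (P2 *m d *m P1 + P1 *m c *m b *m P1) *m (z^-1 *: P1)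
   = z^-1 *: (P2 *m d *m P1 + P1 *m c *m b *m P1).
  by rewrite -scalemxAr mulmxDl -!mulmxA hP.
have T3 : P1 *m c *m b *m Si = z^-1 *: (P1 *m c *m b *m P1) + P1 *m c *m b *m P2.
  by rewrite /Si mulmxDr -scalemxAr.
have T4 : Sg *m d *m Si = P1 *m d *m P1 + z^-1 *: (P2 *m d *m P1) + P2 *m d *m P2.
  rewrite /Sg /Si !mulmxDl !mulmxDr -!scalemxAl -!scalemxAr hd scaler0 addr0 scalerA mulfV //.
  by rewrite scale1r addrA.
rewrite T1 T2 T3 mulmxDr mulmxDl T4 -addrA -addrA /D' scalerDr; congr (_ + _).
exact: zid.
Qed.
End Abs2.
Section Abs3.
Variable K : fieldType.
Lemma mx_inv_uniq' p (M U : 'M[K]_p) : M *m U = 1%:M -> M \in unitmx /\ invmx M = U.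
Proof.
move=> MU; have [uM _] := mulmx1_unit MU; split=> //.
by rewrite -[invmx M]mulmx1 -MU mulmxA mulVmx // mul1mx.
Qed.

Lemma pert_inv p (E0 W0 N : 'M[K]_p) : E0 *m W0 = 1%:M -> N *m W0 *m N = 0 ->
  (E0 + N) *m (W0 - W0 *m N *m W0) = 1%:M.
Proof.
move=> h hN; rewrite mulmxDl !mulmxBr !mulmxA h mul1mx hN mul0mx subr0.
by rewrite subrK.
Qed.

Lemma tri_abs p (P1 E : 'M[K]_p) : P1 *m P1 = P1 ->
  let P2 := 1%:M - P1 in E \in unitmx -> P1 *m E *m P2 = 0 ->
  P1 *m invmx E *m P2 = 0 /\
  forall N, N *m P1 = 0 -> P2 *m N = 0 -> P1 *m E *m P1 + P2 *m E *m P2 + N \in unitmx.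
Proof.
move=> hP P2 uE hE.
have h21 : P2 *m P1 = 0 by rewrite mulmxBl mul1mx hP subrr.
have h12 : P1 *m P2 = 0 by rewrite mulmxBr mulmx1 hP subrr.
have h22 : P2 *m P2 = P2 by rewrite mulmxBl mul1mx h12 subr0.
have e12 : P1 + P2 = 1%:M by rewrite addrC subrK.
clearbody P2.
set W := invmx E.
have EW : E *m W = 1%:M by rewrite mulmxV.
have WE : W *m E = 1%:M by rewrite mulVmx.
have b1 : P1 *m E *m P1 *m W *m P1 = P1.
  have -> : P1 *m E *m P1 = P1 *m E - P1 *m E *m P2.
    by rewrite -{2}[P1 *m E]mulmx1 -mulmxBr -e12 addrK.
  by rewrite hE subr0 -(mulmxA P1 E W) EW mulmx1 hP.
have b1' : P1 *m W *m P1 *m E *m P1 = P1.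
  have h : (P1 *m E *m P1 + P2) *m (P1 *m W *m P1 + P2) = 1%:M.
    rewrite mulmxDl !mulmxDr !mulmxA -(mulmxA (P1 *m E) P1 P1) hP b1 -(mulmxA _ P1 P2) h12 mulmx0.
    by rewrite h21 !mul0mx h22 addr0 add0r.
  have := mulmx1C h; rewrite mulmxDl !mulmxDr !mulmxA.
  rewrite -(mulmxA _ P1 P2) h12 mulmx0 h21 !mul0mx h22 addr0 add0r.
  move=> h'; rewrite -(mulmxA (P1 *m W) P1 P1) hP in h'.
  by rewrite (canRL (addrK P2) h') -e12 addrK.
have e21 : 1%:M - P1 = P2 by rewrite -e12 [P1 + P2]addrC addrK.
have b2 : P2 *m W *m P2 *m E *m P2 = P2.
  have -> : P2 *m W *m P2 = P2 *m W - P2 *m W *m P1.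
    by rewrite -{2}[P2 *m W]mulmx1 -mulmxBr e21.
  rewrite !mulmxBl -(mulmxA P2 W E) WE mulmx1 h22.
  by rewrite -(mulmxA (P2 *m W) P1 E) -(mulmxA (P2 *m W) (P1 *m E) P2) hE mulmx0 subr0.
have b2' : P2 *m E *m P2 *m W *m P2 = P2.
  have h : (P1 + P2 *m W *m P2) *m (P1 + P2 *m E *m P2) = 1%:M.
    rewrite mulmxDl !mulmxDr !mulmxA hP -(mulmxA (P2 *m W) P2 P1) h21 mulmx0.
    by rewrite h12 !mul0mx -(mulmxA (P2 *m W) P2 P2) h22 b2 addr0 add0r.
  have := mulmx1C h; rewrite mulmxDl !mulmxDr !mulmxA hP -(mulmxA (P2 *m E) P2 P1) h21 mulmx0.
  rewrite h12 !mul0mx -(mulmxA (P2 *m E) P2 P2) h22 addr0 add0r.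
  by move=> h'; rewrite (canRL (addKr P1) h') -e12 addKr.
set E0 := P1 *m E *m P1 + P2 *m E *m P2.
set W0 := P1 *m W *m P1 + P2 *m W *m P2.
have EW0 : E0 *m W0 = 1%:M.
  rewrite /E0 /W0 mulmxDl !mulmxDr !mulmxA.
  rewrite -(mulmxA (P1 *m E) P1 P1) hP b1 -(mulmxA (P2 *m E) P2 P2) h22 b2'.
  rewrite -(mulmxA (P1 *m E) P1 P2) h12 mulmx0 mul0mx -(mulmxA (P2 *m E) P2 P1) h21 mulmx0 mul0mx.
  by rewrite !mul0mx addr0 add0r.
have P1W0 : P1 *m W0 = P1 *m W *m P1.
  by rewrite /W0 mulmxDr !mulmxA hP h12 !mul0mx addr0.
have W0P2 : W0 *m P2 = P2 *m W *m P2.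
  by rewrite /W0 mulmxDl -!mulmxA h12 h22 !mulmx0 add0r.
have W0P1 : W0 *m P1 = P1 *m W *m P1.
  by rewrite /W0 mulmxDl -!mulmxA h21 hP !mulmx0 addr0.
have P2W0 : P2 *m W0 = P2 *m W *m P2.
  by rewrite /W0 mulmxDr !mulmxA h21 h22 !mul0mx add0r.
split; last first.
  move=> N hN1 hN2.
  have hN : N *m W0 *m N = 0.
    by rewrite /W0 mulmxDr mulmxDl !mulmxA hN1 -!mulmxA hN2 !mulmx0 !mul0mx addr0.
  by have [] := mulmx1_unit (pert_inv EW0 hN).
set N' := P2 *m E *m P1.
have EE : E = E0 + N'.
  have e : E = (P1 + P2) *m E *m (P1 + P2) by rewrite e12 mul1mx mulmx1.
  rewrite {1}e mulmxDl !mulmxDr !mulmxDl hE add0r /E0 /N' -addrA -addrA; congr (_ + _).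
  by rewrite addrC.
have hN : N' *m W0 *m N' = 0.
  have hm : P1 *m W0 *m P2 = 0 by rewrite P1W0 -mulmxA h12 mulmx0.
  rewrite /N' !mulmxA -(mulmxA (P2 *m E) P1 W0) -(mulmxA (P2 *m E) (P1 *m W0) P2) hm.
  by rewrite mulmx0 !mul0mx.
have [_ iE] := mx_inv_uniq' (pert_inv EW0 hN).
rewrite -EE in iE; rewrite /W iE mulmxBr mulmxBl P1W0 -(mulmxA (P1 *m W) P1 P2) h12 mulmx0 sub0r.
by rewrite !mulmxA P1W0 -(mulmxA (P1 *m W) P1 P2) h12 mulmx0 !mul0mx oppr0.
Qed.
End Abs3.
Section Fin.
Variable K : fieldType.
Lemma final_abs p (PK Sg Si T : 'M[K]_p) :
  PK *m Sg = Sg *m PK -> Sg *m Si = 1%:M -> Si *m Sg = 1%:M ->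
  PK *m T + (1%:M - PK) \in unitmx ->
  (PK + (1%:M - PK) *m (Sg *m T *m Si)) *m invmx (PK *m (Sg *m T *m Si) + (1%:M - PK))
  = Sg *m ((PK + (1%:M - PK) *m T) *m invmx (PK *m T + (1%:M - PK))) *m Si.
Proof.
move=> hc hSS hSi uM.
have conjS : forall X : 'M[K]_p, Sg *m X *m Si *m Sg = Sg *m X.
  by move=> X; rewrite -mulmxA hSi mulmx1.
have PKe : Sg *m PK *m Si = PK by rewrite -hc -mulmxA hSS mulmx1.
have PNe : Sg *m (1%:M - PK) *m Si = 1%:M - PK.
  by rewrite mulmxBr mulmxBl mulmx1 hSS PKe.
have eK : forall X : 'M[K]_p, PK *m (Sg *m X *m Si) = Sg *m (PK *m X) *m Si.
  by move=> X; rewrite !mulmxA hc.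
have eN : forall X : 'M[K]_p, (1%:M - PK) *m (Sg *m X *m Si) = Sg *m ((1%:M - PK) *m X) *m Si.
  by move=> X; rewrite mulmxBl mul1mx eK [in RHS]mulmxBl mul1mx mulmxBr mulmxBl.
set M := PK *m T + (1%:M - PK).
have e1 : PK + (1%:M - PK) *m (Sg *m T *m Si) = Sg *m (PK + (1%:M - PK) *m T) *m Si.
  by rewrite eN -{1}PKe -mulmxDl -mulmxDr.
have e2 : PK *m (Sg *m T *m Si) + (1%:M - PK) = Sg *m M *m Si.
  by rewrite eK -{1}PNe -mulmxDl -mulmxDr.
rewrite e1 e2.
have [_ ->] : Sg *m M *m Si \in unitmx /\ invmx (Sg *m M *m Si) = Sg *m invmx M *m Si.
  apply: mx_inv_uniq'.
  by rewrite !mulmxA conjS -(mulmxA Sg M) mulmxV // mulmx1 hSS.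
by rewrite !mulmxA conjS.
Qed.
End Fin.
HB.instance Definition _ (R : fieldType) := GRing.RMorphism.copy (@frac_poly R) (@FracField.tofrac _).
HB.instance Definition _ (R : fieldType) := GRing.RMorphism.copy (@ratC R) ((@frac_poly R) \o polyC).

Lemma zA_unit (R : fieldType) s (A0 : 'M[R]_s) :
  (frac_poly 'X)%:M - map_mx (@ratC R) A0 \in unitmx.
Proof.
have -> : (frac_poly 'X)%:M - map_mx (@ratC R) A0 = map_mx (@frac_poly R) (char_poly_mx A0).
  by rewrite /char_poly_mx map_mxB map_scalar_mx -map_mx_comp.
rewrite unitmxE det_map_mx unitfE /frac_poly tofrac_eq0.
exact: monic_neq0 (char_poly_monic A0).
Qed.

Section MapL.
Variable R : fieldType.
Local Notation f := (@ratC R).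
Lemma fM m n q (A : 'M[R]_(m,n)) (B : 'M[R]_(n,q)) : map_mx f (A *m B) = map_mx f A *m map_mx f B.
Proof. exact: map_mxM. Qed.
Lemma fD m n (A B : 'M[R]_(m,n)) : map_mx f (A + B) = map_mx f A + map_mx f B.
Proof. exact: map_mxD. Qed.
Lemma fB m n (A B : 'M[R]_(m,n)) : map_mx f (A - B) = map_mx f A - map_mx f B.
Proof. exact: map_mxB. Qed.
Lemma fN m n (A : 'M[R]_(m,n)) : map_mx f (- A) = - map_mx f A.
Proof. exact: map_mxN. Qed.
Lemma f1 m : map_mx f (1%:M : 'M[R]_m) = 1%:M.
Proof. exact: map_mx1. Qed.
Lemma f0 m n : map_mx f (0 : 'M[R]_(m,n)) = 0.
Proof. exact: map_mx0. Qed.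
Lemma fV m (A : 'M[R]_m) : map_mx f (invmx A) = invmx (map_mx f A).
Proof. exact: map_invmx. Qed.
Lemma fU m (A : 'M[R]_m) : (map_mx f A \in unitmx) = (A \in unitmx).
Proof. exact: map_unitmx. Qed.
Lemma fblock m1 m2 n1 n2 (A : 'M[R]_(m1,n1)) (B : 'M[R]_(m1,n2)) (C : 'M[R]_(m2,n1)) (D : 'M[R]_(m2,n2)) :
  map_mx f (block_mx A B C D) = block_mx (map_mx f A) (map_mx f B) (map_mx f C) (map_mx f D).
Proof. exact: map_block_mx. Qed.
Lemma fcol m1 m2 n (A : 'M[R]_(m1,n)) (B : 'M[R]_(m2,n)) :
  map_mx f (col_mx A B) = col_mx (map_mx f A) (map_mx f B).
Proof. exact: map_col_mx. Qed.
Lemma frow m n1 n2 (A : 'M[R]_(m,n1)) (B : 'M[R]_(m,n2)) :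
  map_mx f (row_mx A B) = row_mx (map_mx f A) (map_mx f B).
Proof. exact: map_row_mx. Qed.
End MapL.

Lemma transfer_conj (R : fieldType) n p (owner : 'I_p -> 'I_n) kappa s (Y : realization R s p) :
  let PK := proj R (oracle_coords owner kappa) in
  PK *m rD Y *m PK + (1%:M - PK) \in unitmx ->
  let PKf := map_mx (@ratC R) PK in
  let T := transfer Y in
  let M := PKf *m T + (1%:M - PKf) in
  M \in unitmx /\ transfer (conj_alg owner kappa Y) = (PKf + (1%:M - PKf) *m T) *m invmx M.
Proof.
move=> PK uE PKf T M.
have hK : PKf *m PKf = PKf by rewrite /PKf -fM projP.
have uEf : PKf *m map_mx (@ratC R) (rD Y) *m PKf + (1%:M - PKf) \in unitmx.
  by rewrite /PKf -f1 -!fM -fB -fD fU.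
have := conj_abs (z := frac_poly 'X) (a := map_mx (@ratC R) (rA Y)) (b := map_mx (@ratC R) (rB Y))
  (c := map_mx (@ratC R) (rC Y)) hK uEf (zA_unit _).
have u2 := zA_unit (rA (conj_alg owner kappa Y)).
rewrite /= -/PK in u2. rewrite !(fM, fB, fD, fN, fV, f1) -/PKf in u2.
move=> h; have [uM eq] := h u2; split=> //.
rewrite [LHS]/transfer /= -/PK !(fM, fB, fD, fN, fV, f1) -/PKf.
exact: eq.
Qed.
Lemma transfer_perm (R : fieldType) n p (owner : 'I_p -> 'I_n) m s (Y : realization R s p) :
  let P1 := proj R [set j | (owner j < m)%N] in
  P1 *m rD Y *m (1%:M - P1) = 0 ->
  let P1f := map_mx (@ratC R) P1 in
  let z := frac_poly 'X in
  transfer (perm_alg owner m Y) =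
  (z *: P1f + (1%:M - P1f)) *m transfer Y *m (z^-1 *: P1f + (1%:M - P1f)).
Proof.
move=> P1 hd P1f z.
have hP : P1f *m P1f = P1f by rewrite /P1f -fM projP.
have hz : z != 0 by rewrite /z /frac_poly tofrac_eq0 polyX_eq0.
have hdf : P1f *m map_mx (@ratC R) (rD Y) *m (1%:M - P1f) = 0.
  by rewrite /P1f -f1 -fB -!fM hd f0.
have := perm_abs (z := z) (a := map_mx (@ratC R) (rA Y)) (map_mx (@ratC R) (rB Y))
  (map_mx (@ratC R) (rC Y)) hP hz (zA_unit _) hdf.
move=> [_ eq].
rewrite [LHS]/transfer /= -/P1 !(fM, fB, fD, fN, fV, f1, f0, fblock, fcol, frow) -/P1f.
exact: eq.
Qed.
Lemma SgSi (K : fieldType) p (P : 'M[K]_p) (a b : K) : P *m P = P -> a * b = 1 ->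
  (a *: P + (1%:M - P)) *m (b *: P + (1%:M - P)) = 1%:M.
Proof.
move=> hP hab.
have h12 : P *m (1%:M - P) = 0 by rewrite mulmxBr mulmx1 hP subrr.
have h21 : (1%:M - P) *m P = 0 by rewrite mulmxBl mul1mx hP subrr.
have h22 : (1%:M - P) *m (1%:M - P) = 1%:M - P by rewrite mulmxBl mul1mx h12 subr0.
have e : P + (1%:M - P) = 1%:M by rewrite addrC subrK.
move: h12 h21 h22 e; move: (1%:M - P) => Q h12 h21 h22 e.
rewrite mulmxDl !mulmxDr -!scalemxAl -!scalemxAr hP h12 h21 h22 !scaler0 addr0 add0r.
by rewrite scalerA hab scale1r.
Qed.

Lemma SgC (K : fieldType) p (P Q : 'M[K]_p) (a : K) : Q *m P = P *m Q ->
  Q *m (a *: P + (1%:M - P)) = (a *: P + (1%:M - P)) *m Q.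
Proof.
move=> h; rewrite mulmxDr mulmxDl -scalemxAr -scalemxAl h mulmxBr mulmxBl mulmx1 mul1mx h.
by [].
Qed.

Lemma low_causal (R : fieldType) n p (owner : 'I_p -> 'I_n) m s (X : realization R s p) :
  causal owner X -> low [set j | (owner j < m)%N] (rD X).
Proof.
move=> hc; rewrite /low; apply/matrixP=> i j; rewrite projMR projML !mxE in_setC !inE.
case: (ltnP (owner i) m) => hi; case: (ltnP (owner j) m) => hj /=; rewrite ?mul0r ?mulr0 //.
by rewrite hc ?mulr0 ?mul0r // (leq_trans hi hj).
Qed.

Theorem propositionG1 (R : fieldType) (n p s : nat) (owner : 'I_p -> 'I_n)
  (X : realization R s p) (kappa : {set 'I_n}) (m : nat) :
  (m < n)%N ->
  causal owner X ->
  principal_sub (rD X) (oracle_coords owner kappa) \in unitmx ->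
  transfer (conj_alg owner kappa (perm_alg owner m X)) =
  transfer (perm_alg owner m (conj_alg owner kappa X)).
Proof.
move=> _ hc hDk.
set S := oracle_coords owner kappa.
set S1 := [set j | (owner j < m)%N].
set PK := proj R S.
set P1 := proj R S1.
have hE : PK *m rD X *m PK + (1%:M - PK) \in unitmx by apply: E_unit.
have lowDX : low S1 (rD X) by apply: low_causal.
have hdX : P1 *m rD X *m (1%:M - P1) = 0 by rewrite projC.
have hP1 : P1 *m P1 = P1 by apply: projP.
have lowE : low S1 (PK *m rD X *m PK + (1%:M - PK)).
  apply: lowD; first by apply: lowM; [apply: lowM; [apply: low_proj|] | apply: low_proj].
  by rewrite projC; apply: low_proj.
have [lowW hN] := tri_abs hP1 hE (etrans (congr1 _ (projC _ _)) lowE).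
have hEp : PK *m rD (perm_alg owner m X) *m PK + (1%:M - PK) \in unitmx.
  set E := PK *m rD X *m PK + (1%:M - PK) in hN.
  set N := P1 *m (PK *m (rC X *m rB X) *m PK) *m (1%:M - P1).
  have hN1 : N *m P1 = 0 by rewrite /N -mulmxA mulmxBl mul1mx hP1 subrr mulmx0.
  have hN2 : (1%:M - P1) *m N = 0 by rewrite /N !mulmxA mulmxBl mul1mx hP1 subrr !mul0mx.
  have -> : PK *m rD (perm_alg owner m X) *m PK + (1%:M - PK) =
     P1 *m E *m P1 + (1%:M - P1) *m E *m (1%:M - P1) + N.
    rewrite /= /E /N -(mulmxA P1 (rC X) (rB X)) !projC.
    move: (rC X *m rB X) => G.
    apply/matrixP=> i j; rewrite !(mxDE, projMR, projML) !projE !in_setC -/S1.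
    case: eqP => [<-|_]; case: (i \in S1); case: (i \in S); rewrite /= ?mulr0n;
      try case: (j \in S1); try case: (j \in S);
      rewrite /= ?mul0r ?mulr0 ?mul1r ?mulr1 ?add0r ?addr0 ?mulr0n ?mulr1n //.
  exact: hN.
have lowDC : low S1 (rD (conj_alg owner kappa X)).
  have lowW' : low S1 (invmx (PK *m rD X *m PK + (1%:M - PK))) by rewrite /low -projC.
  rewrite /=.
  by repeat first [exact: lowW' | exact: lowDX | exact: low1 | exact: low_proj
                  | apply: lowM | apply: lowB | apply: lowD].
have hdC : P1 *m rD (conj_alg owner kappa X) *m (1%:M - P1) = 0 by rewrite projC.
have [uM1 eL] := transfer_conj hEp.
have [uM eR] := transfer_conj hE.
rewrite eL (transfer_perm hdX) (transfer_perm hdC) eR.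
set PKf := map_mx (@ratC R) PK.
set P1f := map_mx (@ratC R) P1.
set z := frac_poly 'X.
have hz : z != 0 by rewrite /z /frac_poly tofrac_eq0 polyX_eq0.
have hP1f : P1f *m P1f = P1f by rewrite /P1f -fM hP1.
have h1 : PKf *m (z *: P1f + (1%:M - P1f)) = (z *: P1f + (1%:M - P1f)) *m PKf.
  by apply: SgC; rewrite /PKf /P1f -!fM projCom.
have h2 : (z *: P1f + (1%:M - P1f)) *m (z^-1 *: P1f + (1%:M - P1f)) = 1%:M.
  by apply: SgSi; rewrite ?mulfV.
have h3 : (z^-1 *: P1f + (1%:M - P1f)) *m (z *: P1f + (1%:M - P1f)) = 1%:M.
  by apply: SgSi; rewrite ?mulVf.
exact: (final_abs h1 h2 h3 uM).
Qed.
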